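(* Let $S$ be an isolated invariant set for $f$. Suppose $P=(N,L)$ and $P'=(N',L)$ are filtration pairs for $S$ with $N\setminus L\subset N'\setminus L$ and $f(L)\subset\operatorname{Int}L$. Then the pointed space maps $f_P$ and $f_{P'}$ are shift equivalent.
   Context: Let $X$ be a locally compact metric space, $U\subset X$ open and $f:U\to X$ continuous. A solution through $x$ is a map $\sigma:\mathbb Z\to U$ with $\sigma(0)=x$ and $f(\sigma(n))=\sigma(n+1)$ for all $n$; for $N\subset U$, $\operatorname{Inv}N$ is the set of $x\in N$ admitting a solution through $x$ with values in $N$. A compact $N\subset U$ is an isolating neighborhood if $\operatorname{Inv}N\subset\operatorname{Int}N$; $S$ is an isolated invariant set if $S=\operatorname{Inv}N$ for some isolating neighborhood $N$. The exit set is $N^-=\{x\in N:f(x)\notin\operatorname{Int}N\}$. A filtration pair for $S$ is a pair of compact sets $L\subset N$ in the interior of the domain of $f$, each the closure of its interior, with (1) $\operatorname{cl}(N\setminus L)$ an isolating neighborhood and $\operatorname{Inv}\operatorname{cl}(N\setminus L)=S$; (2) $L$ a neighborhood of $N^-$ in $N$; (3) $f(L)\cap\operatorname{cl}(N\setminus L)=\emptyset$. For a filtration pair $P=(N,L)$, $N_L=N/L$ with $L$ collapsed to the base point $[L]$ (if $L=\emptyset$, a disjoint point $[L]$ is adjoined), $p:N\to N_L$ the quotient map, and the pointed space map $f_P:N_L\to N_L$ is $f_P([L])=[L]$, $f_P(p(x))=p(f(x))$ for $x\in N\setminus L$. Base-point preserving maps $F:Y\to Y$, $G:Y'\to Y'$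 are shift equivalent if there exist $m\in\mathbb Z^+$ and continuous base-point preserving $r:Y\to Y'$, $s:Y'\to Y$ with $r\circ F=G\circ r$, $s\circ G=F\circ s$, $s\circ r=F^m$, $r\circ s=G^m$. *)

(* Defs.v *)
From HB Require Import structures.
From mathcomp Require Import all_boot all_order all_algebra.
From mathcomp Require Import all_classical all_reals all_analysis.
Set Implicit Arguments. Unset Strict Implicit. Unset Printing Implicit Defensive.
Import Order.TTheory GRing.Theory Num.Theory.
Local Open Scope classical_set_scope.
Local Open Scope ring_scope.

Section Conley.
Variable (T : topologicalType).

(* f : U -> X is represented by a total map f : T -> T, only used on U. *)
Definition is_solution (U : set T) (f : T -> T) (x : T) (sigma : int -> T) : Prop :=
  sigma 0 = x /\ (forall n : int, U (sigma n)) /\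
  (forall n : int, f (sigma n) = sigma (n + 1)).

Definition Inv (U : set T) (f : T -> T) (N : set T) : set T :=
  [set x | N x /\ exists sigma, is_solution U f x sigma /\ forall n, N (sigma n)].

Definition isolating_nbhd (U : set T) (f : T -> T) (N : set T) : Prop :=
  compact N /\ N `<=` U /\ Inv U f N `<=` interior N.

Definition isolated_invariant_set (U : set T) (f : T -> T) (S : set T) : Prop :=
  exists N, isolating_nbhd U f N /\ S = Inv U f N.

Definition exit_set (f : T -> T) (N : set T) : set T :=
  [set x | N x /\ ~ interior N (f x)].

Definition rel_nbhd (N A B : set T) : Prop :=
  exists V, open V /\ B `<=` V /\ V `&` N `<=` A.

Definition filtration_pair (U : set T) (f : T -> T) (S : set T) (N L : set T) : Prop :=
  compact N /\ compact L /\ L `<=` N /\ N `<=` interior U /\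
  N = closure (interior N) /\ L = closure (interior L) /\
  (isolating_nbhd U f (closure (N `\` L)) /\ Inv U f (closure (N `\` L)) = S) /\
  rel_nbhd N L (exit_set f N) /\
  (f @` L) `&` closure (N `\` L) = set0.

(* The pointed space N_L : points of N \ L together with the base point [L]
   (= None).  When L is empty, None is the adjoined disjoint point. *)
Definition pointed (N L : set T) := option {x : T | (N `\` L) x}.

(* quotient map p : N -> N_L (defined on all of T; only used on N) *)
Definition qmap (N L : set T) (x : T) : pointed N L :=
  match pselect ((N `\` L) x) with
  | left h => Some (exist _ x h)
  | right _ => None
  end.

(* quotient topology on N_L : O is open iff p^-1(O) is open in N *)
Definition qopen (N L : set T) (O : set (pointed N L)) : Prop :=
  exists V, open V /\ [set x | N x /\ O (qmap N L x)] = V `&` N.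

Definition fP (f : T -> T) (N L : set T) (y : pointed N L) : pointed N L :=
  match y with
  | None => None
  | Some x => qmap N L (f (proj1_sig x))
  end.
End Conley.

Definition cont_wrt (A B : Type) (openA : set (set A)) (openB : set (set B))
  (g : A -> B) : Prop :=
  forall O, openB O -> openA (g @^-1` O).

Definition shift_equivalent (A B : Type) (openA : set (set A)) (openB : set (set B))
  (a0 : A) (b0 : B) (F : A -> A) (G : B -> B) : Prop :=
  exists (m : nat) (r : A -> B) (s : B -> A),
    (0 < m)%N /\ cont_wrt openA openB r /\ cont_wrt openB openA s /\
    r a0 = b0 /\ s b0 = a0 /\
    r \o F = G \o r /\ s \o G = F \o s /\
    s \o r = iter m F /\ r \o s = iter m G.

(* Main.v *)
Require Import Defs.
From HB Require Import structures.
From mathcomp Require Import all_boot all_order all_algebra.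
From mathcomp Require Import all_classical all_reals all_analysis.
From mathcomp Require Import zify.
Import Order.TTheory GRing.Theory Num.Theory.
Local Open Scope classical_set_scope.
Local Open Scope ring_scope.

Lemma qmap_Some {T : topologicalType} {N L : set T} {x} (h : (N `\` L) x) :
  qmap N L x = Some (exist _ x h).
Proof.
rewrite /qmap; case: pselect => [h'|h']; last by [].
by rewrite (Prop_irrelevance h h').
Qed.

Lemma qmap_None {T : topologicalType} {N L : set T} {x} :
  ~ (N `\` L) x -> qmap N L x = None.
Proof. by rewrite /qmap; case: pselect. Qed.

Lemma qmap_val {T : topologicalType} {N L : set T} (x : {x | (N `\` L) x}) :
  qmap N L (proj1_sig x) = Some x.
Proof. by case: x => x h; rewrite qmap_Some. Qed.

Lemma iterN {T : Type} {f : T -> T} {N : set T} :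
  (forall x, N x -> N (f x)) -> forall k z, N z -> N (iter k f z).
Proof. by move=> Ni; elim=> [|k IH] z Nz //=; apply: Ni; apply: IH. Qed.


Lemma fPq (T : topologicalType) (f : T -> T) (N L : set T)
  (Linv : forall x, L x -> L (f x)) z : N z ->
  @fP _ f N L (qmap N L z) = qmap N L (f z).
Proof.
move=> Nz.
case: (pselect ((N `\` L) z)) => h; first by rewrite (qmap_Some h).
rewrite qmap_None //=.
have Lz : L z by apply: contrapT => nL; apply: h.
by symmetry; apply: qmap_None => -[_]; apply; apply: Linv.
Qed.

Lemma iterfPNone (T : topologicalType) (f : T -> T) (N L : set T) k :
  iter k (@fP _ f N L) None = None.
Proof. by elim: k => //= k ->. Qed.

Lemma iterfPq (T : topologicalType) (f : T -> T) (N L : set T)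
  (Ninv : forall x, N x -> N (f x))
  (Linv : forall x, L x -> L (f x)) k z : N z ->
  iter k (@fP _ f N L) (qmap N L z) = qmap N L (iter k f z).
Proof.
move=> Nz; elim: k => [|k IH] //=.
by rewrite IH fPq //; apply: iterN.
Qed.

Lemma Ninv_of {T : topologicalType} {f : T -> T} {N L : set T} :
  rel_nbhd N L (exit_set f N) -> (forall x, L x -> L (f x)) -> L `<=` N ->
  forall x, N x -> N (f x).
Proof.
move=> [V [oV [exV VL]]] Li LN x Nx.
case: (pselect (L x)) => Lx; first by apply: LN; apply: Li.
case: (pselect (interior N (f x))) => h; first exact: interior_subset.
by exfalso; apply: Lx; apply: VL; split => //; apply: exV; split.
Qed.

Lemma fip (X : topologicalType) (K : set X) (I : Type) (J : set I)
  (D : I -> set X) (i0 : I) : J i0 -> compact K ->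
  (forall i, J i -> D i `<=` K) -> (forall i, J i -> D i !=set0) ->
  (forall i j, J i -> J j -> exists2 k, J k & D k `<=` D i `&` D j) ->
  exists z, K z /\ forall i, J i -> closure (D i) z.
Proof.
move=> Ji0 cK DK Dne Ddir.
have FF : Filter (filter_from J D).
  by apply: filter_from_filter => //; exists i0.
have PF : ProperFilter (filter_from J D) := filter_from_proper FF Dne.
have [z [Kz cz]] := cK _ PF (ex_intro2 _ _ i0 Ji0 (DK i0 Ji0)).
exists z; split => // i Ji B hB.
exact: (cz (D i) B (ex_intro2 _ _ i Ji (fun _ h => h)) hB).
Qed.

Lemma iter_nbhs {X : topologicalType} {f : X -> X} {U N' : set X}
  (fc : forall p, U p -> {for p, continuous f}) (N'U : N' `<=` U)
  (N'inv : forall x, N' x -> N' (f x)) :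
  forall k x, N' x -> forall A, nbhs (iter k f x) A -> nbhs x (iter k f @^-1` A).
Proof.
elim=> [|k IH] x N'x A hA //.
have h1 : nbhs (iter k f x) (f @^-1` A).
  have := fc _ (N'U _ (iterN N'inv k x N'x)) A hA. by [].
exact: (IH x N'x _ h1).
Qed.

Lemma key_compact {X : topologicalType} (hX : hausdorff_space X) {U : set X}
  {f : X -> X} (fc : forall p, U p -> {for p, continuous f}) {N N' L : set X}
  (cN' : compact N') (cN : compact N) (N'U : N' `<=` U)
  (N'inv : forall x, N' x -> N' (f x))
  (isoN : Defs.Inv U f (closure (N `\` L)) `<=` interior (closure (N `\` L)))
  (SS : Defs.Inv U f (closure (N' `\` L)) = Defs.Inv U f (closure (N `\` L))) :
  exists m, forall y, (forall k, (k <= m.*2)%N -> (N' `\` L) (iter k f y)) ->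
    N (iter m f y).
Proof.
apply: contrapT => H.
have H' : forall m, exists y, (forall k, (k <= m.*2)%N -> (N' `\` L) (iter k f y))
    /\ ~ N (iter m f y).
  move=> m; apply: contrapT => H2; apply: H; exists m => y Hy.
  by apply: contrapT => Ny; apply: H2; exists y.
pose W m := [set w | forall k, (k <= m.*2)%N -> (N' `\` L) (iter k f w)].
pose B m := iter m f @` W m.
have Bmono : forall i j, (i <= j)%N -> B j `<=` B i.
  move=> i j ij _ [w0 Ww0 <-]; exists (iter (j - i) f w0).
    move=> k hk; rewrite -iterD; apply: Ww0; rewrite -!addnn in hk *; lia.
  by rewrite -iterD subnKC.
have BN' : forall m, B m `<=` N' `\` L.
  by move=> m _ [w Ww <-]; apply: Ww; rewrite -addnn leq_addr.
have CN' : closure (N' `\` L) `<=` N'.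
  move=> x hx; apply: (compact_closed hX cN'); apply: (closureS _ hx).
  by move=> ? [].
pose Good z := N' z /\ forall m, closure (B m) z.
have pre_ex : forall z, Good z -> exists w, Good w /\ f w = z.
  move=> z [N'z cz].
  pose D := (fun p : (nat * set X)%type => [set w | B p.1 w /\ p.2 (f w)]).
  have Dne : forall p, [set p | nbhs z p.2] p -> D p !=set0.
    move=> [m V] /= hV.
    have [u [[w0 Ww0 <-] Vu]] := cz m.+1 V hV.
    exists (iter m f w0); split => /=; last by rewrite -iterS.
    exists w0 => // k hk; apply: Ww0; rewrite -!addnn in hk *; lia.
  have Ddir : forall i j, [set p | nbhs z p.2] i -> [set p | nbhs z p.2] j ->
      exists2 k, [set p | nbhs z p.2] k & D k `<=` D i `&` D j.
    move=> [m V] [m' V'] /= hV hV'; exists (maxn m m', V `&` V').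
      exact: filterI.
    move=> w /= [Bw [Vw V'w]]; split; split => //.
      by apply: (Bmono _ _ (leq_maxl m m')).
    by apply: (Bmono _ _ (leq_maxr m m')).
  have [w [N'w cw]] := @fip X N' (nat * set X)%type [set p | nbhs z p.2]
    D (0%N, setT) filterT cN'
    (fun p _ w hw => (BN' _ _ hw.1).1) Dne Ddir.
  exists w; split.
    split => // m; apply: (closureS _ (cw (m, setT) filterT)).
    by move=> ? [].
  apply: hX => A Bz hA hBz.
  have [u [[_ Bu] Au]] := cw (0%N, Bz) hBz (f @^-1` A) (fc w (N'U w N'w) A hA).
  by exists (f u).
pose pre z := match pselect (exists w, Good w /\ f w = z) with
  | left h => proj1_sig (cid h) | right _ => z end.
have preP : forall z, Good z -> Good (pre z) /\ f (pre z) = z.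
  move=> z gz; rewrite /pre; case: pselect => [h|h].
    exact: (proj2_sig (cid h)).
  by exfalso; apply: h; apply: pre_ex.
have iterpre : forall k z, Good z -> Good (iter k pre z).
  by elim=> [|k IH] z gz //=; apply: (preP _ (IH _ gz)).1.
have fwd : forall z, Good z -> forall j, closure (N' `\` L) (iter j f z).
  move=> z [N'z cz] j A hA.
  have [u [[w0 Ww0 <-] hu]] := cz j _ (iter_nbhs fc N'U N'inv j z N'z A hA).
  exists (iter j f (iter j f w0)); split => //.
  by rewrite -iterD; apply: Ww0; rewrite -addnn.
have Dne : forall m, [set: nat] m -> (B m `\` N) !=set0.
  move=> m _; have [y [Wy Ny]] := H' m.
  by exists (iter m f y); split => //; exists y.
have Ddir : forall i j, [set: nat] i -> [set: nat] j ->
    exists2 k, [set: nat] k & (B k `\` N) `<=` (B i `\` N) `&` (B j `\` N).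
  move=> i j _ _; exists (maxn i j) => // w [Bw Nw]; split; split => //.
    by apply: (Bmono _ _ (leq_maxl i j)).
  by apply: (Bmono _ _ (leq_maxr i j)).
have [z [N'z cz]] := @fip X N' nat setT (fun m => B m `\` N) 0%N I cN'
  (fun m _ w hw => (BN' _ _ hw.1).1) Dne Ddir.
have gz : Good z.
  split => // m; apply: (closureS _ (cz m I)); by move=> ? [].
have czN : closure (N' `\` N) z.
  apply: (closureS _ (cz 0%N I)) => w [Bw Nw]; split => //.
  exact: (BN' _ _ Bw).1.
pose sigma (n : int) := match n with
  | Posz k => iter k f z | Negz k => iter k.+1 pre z end.
have sigC : forall n, closure (N' `\` L) (sigma n).
  case=> k /=; first exact: fwd.
  exact: (fwd _ (iterpre k.+1 z gz) 0%N).
have hInv : Defs.Inv U f (closure (N' `\` L)) z.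
  split; first exact: (fwd _ gz 0%N).
  exists sigma; split => //; split => //; split.
    by move=> n; apply: N'U; apply: CN'.
  case=> [k|[|k]].
  - have -> : (Posz k + 1 = Posz k.+1 :> int) by lia.
    by [].
  - have -> : (Negz 0 + 1 = 0 :> int) by lia.
    exact: (preP _ gz).2.
  - have -> : (Negz k.+1 + 1 = Negz k :> int) by lia.
    exact: (preP _ (iterpre k.+1 z gz)).2.
rewrite SS in hInv; have hz := isoN _ hInv.
have [p [[N'p Np] cp]] := czN _ hz.
apply: Np; apply: (compact_closed hX cN); apply: (closureS _ cp).
by move=> ? [].
Qed.

Theorem mainTheorem19 (R : realType) (X : pseudoMetricType R)
  (hX : hausdorff_space X) (lcX : locally_compact [set: X])
  (U : set X) (f : X -> X) (oU : open U) (cf : {within U, continuous f})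
  (S N N' L : set X)
  (hS : isolated_invariant_set U f S)
  (hP : filtration_pair U f S N L) (hP' : filtration_pair U f S N' L)
  (hsub : N `\` L `<=` N' `\` L)
  (hfL : f @` L `<=` interior L) :
  shift_equivalent (@qopen X N L) (@qopen X N' L) None None
    (@fP X f N L) (@fP X f N' L).
Proof.
move: hP => [cN [cL [LN [NU [_ [_ [[[_ [_ isoN]] SN] [exN _]]]]]]]].
move: hP' => [cN' [_ [LN' [N'U [_ [_ [[_ SN'] [exN' _]]]]]]]].
have fc : forall p, U p -> {for p, continuous f}.
  by rewrite continuous_open_subspace // in cf; move=> p Up; apply: cf; rewrite inE.
have Linv : forall x, L x -> L (f x).
  by move=> x Lx; apply: interior_subset; apply: hfL; exists x.
have Ninv := Ninv_of exN Linv LN.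
have N'inv := Ninv_of exN' Linv LN'.
have NN' : N `<=` N'.
  move=> x Nx; case: (pselect (L x)) => Lx; first exact: LN'.
  by have [] := hsub x (conj Nx Lx).
have N'U' : N' `<=` U by move=> x /N'U /interior_subset.
have SS : Defs.Inv U f (closure (N' `\` L)) = Defs.Inv U f (closure (N `\` L)).
  by rewrite SN SN'.
have [m key] := key_compact hX fc cN' cN N'U' N'inv isoN SS.
pose M := (m.*2).+1.
have iterL : forall j z, L z -> L (iter j f z) by move=> j z; apply: iterN.
have NM : forall y, N' y -> N (iter M f y).
  move=> y N'y; case: (pselect (L (iter M f y))) => h; first exact: LN.
  have nL : forall k, (k <= M)%N -> ~ L (iter k f y).
    move=> k hk Lk; apply: h; rewrite -(subnK hk) iterD; exact: iterL.
  have h1 : N (iter m f (f y)).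
    apply: key => k hk; rewrite -iterSr; split; first exact: iterN.
    by apply: nL; rewrite /M ltnS.
  have -> : iter M f y = iter m f (iter m f (f y)).
    by rewrite /M iterSr -iterD addnn.
  exact: iterN.
pose r (y : pointed N L) : pointed N' L :=
  match y with Some x => qmap N' L (proj1_sig x) | None => None end.
pose s (y : pointed N' L) : pointed N L :=
  match y with Some x => qmap N L (iter M f (proj1_sig x)) | None => None end.
have rq : forall z, N z -> r (qmap N L z) = qmap N' L z.
  move=> z Nz; case: (pselect ((N `\` L) z)) => h; first by rewrite (qmap_Some h).
  rewrite (qmap_None h) /=; symmetry; apply: qmap_None => -[_ Lz]; exact: h.
have sq : forall z, N' z -> s (qmap N' L z) = qmap N L (iter M f z).
  move=> z Nz; case: (pselect ((N' `\` L) z)) => h; first by rewrite (qmap_Some h).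
  rewrite (qmap_None h) /=; symmetry; apply: qmap_None => -[_]; apply.
  by apply: (iterL M z); apply: contrapT => nL; apply: h.
exists M, r, s; split => //; split; [|split; [|split => //; split => //]].
- move=> O [V [oV HV]]; exists V; split => //.
  apply/seteqP; split => x /=.
    move=> [Nx]; rewrite /preimage /= rq // => Ox.
    have : [set x | N' x /\ O (qmap N' L x)] x by split => //; apply: NN'.
    by rewrite HV => -[].
  move=> [Vx Nx]; split => //; rewrite /preimage /= rq //.
  have : (V `&` N') x by split => //; apply: NN'.
  by rewrite -HV => -[].
- move=> O [V [oV HV]]; exists (interior (iter M f @^-1` V)); split.
    exact: open_interior.
  apply/seteqP; split => x /=.
    move=> [N'x]; rewrite /preimage /= sq // => Ox.
    have : [set x | N x /\ O (qmap N L x)] (iter M f x) by split => //; apply: NM.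
    rewrite HV => -[Vx _]; split => //.
    apply: (iter_nbhs fc N'U' N'inv M x N'x).
    by apply: open_nbhs_nbhs; split.
  move=> [Wx N'x]; split => //; rewrite /preimage /= sq //.
  have : (V `&` N) (iter M f x) by split; [exact: interior_subset Wx | apply: NM].
  by rewrite -HV => -[].
- split; [|split; [|split]].
  + apply: funext => -[[x [Nx nLx]]|] //=.
    by rewrite rq ?fPq //; by [apply: NN' | apply: Ninv].
  + apply: funext => -[[x [Nx nLx]]|] //=.
    rewrite sq ?fPq //; try by [apply: NM | apply: N'inv].
    by rewrite /M -iterSr.
  + apply: funext => -[[x [Nx nLx]]|]; last by rewrite /= iterfPNone.
    rewrite -(qmap_Some (conj Nx nLx)) /comp rq // sq ?iterfPq //; by [apply: NN'].
  + apply: funext => -[[x [Nx nLx]]|]; last by rewrite /= iterfPNone.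
    rewrite -(qmap_Some (conj Nx nLx)) /comp sq // rq ?iterfPq //; by [apply: NM].
Qed.
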